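(* Let $Q$ be a finite-dimensional real affine space modelled on $V$ (with a norm $\|\cdot\|$ on $V$), $q\in Q$, $n\ge0$, and suppose $f\in A(Q)$ can be written as $$f=\sum_{m=0}^nk^m+r,$$ where each $k^m$ is a homogeneous polynomial of degree $m$ at $q$ and $r$ is a remainder of order $n$ at $q$. Then for $0\le j\le n$ and every $v\in V$, $$k^j(q+v)=\frac1{j!}\mathrm D^jf(q;v).$$
   Context: $k:Q\to\mathbb R$ is a homogeneous polynomial of degree $m$ at $q$ if there is $F:Q\times V^m\to\mathbb R$, linear in each vector argument at the fixed point $q$, with $k(q+v)=\frac1{m!}F(q;v,\dots,v)$ for all $v\in V$. $r$ is a remainder of order $n$ at $q$ if $r(q)=0$ and $\lim_{v\to0}r(q+v)/\|v\|^n=0$. The $j$-th directional derivative is $\mathrm D^jf(q;v)=\lim_{s\to0}s^{-j}\Delta^jf(q;sv)$ with $\Delta^jf(q;w)=(-1)^j\sum_{l=0}^j(-1)^l\binom jl f(q+lw)$. *)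

(* Defs.v *)
From HB Require Import structures.
From mathcomp Require Import all_boot all_order all_algebra.
From mathcomp Require Import all_classical all_reals all_analysis.
Set Implicit Arguments. Unset Strict Implicit. Unset Printing Implicit Defensive.
Import Order.TTheory GRing.Theory Num.Theory.
Import numFieldNormedType.Exports.
Local Open Scope classical_set_scope.
Local Open Scope ring_scope.

Definition affine_space (R : realType) (V : normedModType R) (Q : Type)
    (add : Q -> V -> Q) : Prop :=
  [/\ forall q, add q 0 = q,
      forall q v w, add (add q v) w = add q (v + w)
    & forall p p', exists! v, add p v = p'].

Definition finite_dim (R : realType) (V : normedModType R) : Prop :=
  exists (d : nat) (e : 'I_d -> V),
    forall v, exists c : 'I_d -> R, v = \sum_(i < d) c i *: e i.

Definition upd (V : Type) (m : nat) (w : 'I_m -> V) (i : 'I_m) (x : V) :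
  'I_m -> V := fun j => if j == i then x else w j.

Definition multilinear (R : realType) (V : normedModType R) (m : nat)
    (F : ('I_m -> V) -> R) : Prop :=
  forall (w : 'I_m -> V) (i : 'I_m) (a : R) (x y : V),
    F (upd w i (a *: x + y)) = a * F (upd w i x) + F (upd w i y).

Definition homogeneous_at (R : realType) (V : normedModType R) (Q : Type)
    (add : Q -> V -> Q) (m : nat) (q : Q) (k : Q -> R) : Prop :=
  exists F : ('I_m -> V) -> R, multilinear F /\
    forall v : V, k (add q v) = (m`!%:R)^-1 * F (fun _ => v).

Definition remainder_at (R : realType) (V : normedModType R) (Q : Type)
    (add : Q -> V -> Q) (n : nat) (q : Q) (r : Q -> R) : Prop :=
  r q = 0 /\ (fun v : V => r (add q v) / `|v| ^+ n) @ (0 : V)^' --> (0 : R).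

Definition fdiff (R : realType) (V : normedModType R) (Q : Type)
    (add : Q -> V -> Q) (j : nat) (f : Q -> R) (q : Q) (w : V) : R :=
  (-1) ^+ j * \sum_(l < j.+1) (-1) ^+ l * 'C(j, l)%:R * f (add q (l%:R *: w)).

(* Main.v *)
Require Import Defs.
From HB Require Import structures.
From mathcomp Require Import all_boot all_order all_algebra.
From mathcomp Require Import all_classical all_reals all_analysis.
From mathcomp Require Import ring zify.
Set Implicit Arguments. Unset Strict Implicit. Unset Printing Implicit Defensive.
Import Order.TTheory GRing.Theory Num.Theory.
Import numFieldNormedType.Exports.
Local Open Scope classical_set_scope.
Local Open Scope ring_scope.

Definition Sc (R : comNzRingType) (j m : nat) : R :=
  \sum_(l < j.+1) (-1) ^+ l * 'C(j, l)%:R * (l%:R) ^+ m.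

Lemma Sc_rec (R : comNzRingType) j m :
  Sc R j.+1 m.+1 = - (j.+1)%:R * \sum_(i < m.+1) 'C(m, i)%:R * Sc R j i.
Proof.
rewrite /Sc big_ord_recl /= expr0n /= mulr0 add0r.
have E : forall l : 'I_j.+1,
  (-1) ^+ (bump 0 l) * 'C(j.+1, bump 0 l)%:R * ((bump 0 l)%:R) ^+ m.+1
  = - (j.+1)%:R * \sum_(i < m.+1) 'C(m, i)%:R * ((-1) ^+ l * 'C(j, l)%:R * (l%:R) ^+ i) :> R.
  move=> l; rewrite /bump /= add1n.
  have H := mul_bin_diag j.+1 l; rewrite /= in H.
  rewrite [(l.+1%:R) ^+ _]exprS -natr1 exprD1n.
  have -> : (-1) ^+ l.+1 * ('C(j.+1, l.+1))%:R * ((l%:R + 1) * \sum_(i < m.+1) l%:R ^+ i *+ 'C(m, i))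
     = - (-1) ^+ l * ((l.+1 * 'C(j.+1, l.+1))%N%:R) * \sum_(i < m.+1) l%:R ^+ i *+ 'C(m, i) :> R.
    rewrite natrM -natr1 exprS; ring.
  rewrite -H natrM mulr_sumr mulr_sumr; apply: eq_bigr => i _.
  rewrite -mulr_natr; ring.
rewrite (eq_bigr _ (fun l _ => E l)) -mulr_sumr; congr (_ * _).
rewrite exchange_big /=; apply: eq_bigr => i _; by rewrite mulr_sumr.
Qed.

Lemma Sc_val (R : comNzRingType) j :
  (forall m, (m < j)%N -> Sc R j m = 0) /\ Sc R j j = (-1) ^+ j * (j`!)%:R.
Proof.
elim: j => [|j [IH1 IH2]].
  split=> // ; rewrite /Sc big_ord1 /= expr0 !mul1r //.
split.
  case=> [|m] Hm.
    rewrite /Sc.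
    have := exprD1n (-1 : R) j.+1; rewrite addNr expr0n /= => H.
    rewrite [RHS]H; apply: eq_bigr => i _; by rewrite expr0 mulr1 mulr_natr.
  rewrite Sc_rec big1 ?mulr0 // => i _.
  rewrite IH1 ?mulr0 //. have := ltn_ord i. lia.
rewrite Sc_rec big_ord_recr /= big1 ?add0r; last first.
  move=> i _; rewrite IH1 ?mulr0 //.
rewrite IH2 binn factS natrM exprS; ring.
Qed.
Lemma hom_scale (R : realType) (V : normedModType R) (m : nat)
  (F : ('I_m -> V) -> R) : multilinear F ->
  forall t v, F (fun _ => t *: v) = t ^+ m * F (fun _ => v).
Proof.
move=> HF t v.
have Hs : forall w i x, F (upd w i (t *: x)) = t * F (upd w i x).
  move=> w i x.
  have H0 : F (upd w i 0) = 0.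
    have := HF w i 1 0 0; rewrite scaler0 addr0 mul1r => H.
    have := congr1 (fun z => z - F (upd w i 0)) H.
    by rewrite /= subrr addrK => ->.
  by have := HF w i t x 0; rewrite addr0 H0 addr0.
pose G p := fun j : 'I_m => if (j < p)%N then t *: v else v.
have HG : forall p, (p <= m)%N -> F (G p) = t ^+ p * F (G 0%N).
  elim=> [|p IH] Hp; first by rewrite expr0 mul1r.
  have Hpm : (p < m)%N by [].
  have -> : G p.+1 = upd (G p) (Ordinal Hpm) (t *: v).
    apply: funext => i; rewrite /G /upd.
    case: eqP => [-> /=|Hne]; first by rewrite ltnSn.
    rewrite ltnS leq_eqVlt; case: eqP => // Hi.
    by exfalso; apply: Hne; apply: val_inj.
  rewrite Hs.
  have -> : upd (G p) (Ordinal Hpm) v = G p.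
    apply: funext => i; rewrite /G /upd.
    case: eqP => [-> /=|//]; by rewrite ltnn.
  by rewrite IH ?exprS ?mulrA // ltnW.
have -> : (fun _ => t *: v) = G m by apply: funext => i; rewrite /G ltn_ord.
rewrite HG //; congr (_ * F _); apply: funext => i; by rewrite /G ltn0.
Qed.

Lemma homog_scale (R : realType) (V : normedModType R) (Q : Type)
    (add : Q -> V -> Q) (m : nat) (q : Q) (k : Q -> R) :
  homogeneous_at add m q k -> forall t v, k (add q (t *: v)) = t ^+ m * k (add q v).
Proof.
move=> [F [HF Hk]] t v; rewrite !Hk hom_scale //; ring.
Qed.

Lemma lin_cvg (R : realType) (V : normedModType R) (a : R) (v : V) :
  (fun s : R => (a * s) *: v) @ (0:R) --> (0:V).
Proof.
rewrite -[X in _ --> X](scale0r v); apply: cvgZr_tmp.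
rewrite -[X in _ --> X](mulr0 a); apply: cvgMl_tmp. exact: cvg_id.
Qed.

Theorem proposition14 (R : realType) (V : normedModType R) (Q : Type)
    (add : Q -> V -> Q) (q : Q) (n : nat) (f : Q -> R)
    (k : nat -> Q -> R) (r : Q -> R) :
  affine_space add -> finite_dim V ->
  (forall m, (m <= n)%N -> homogeneous_at add m q (k m)) ->
  remainder_at add n q r ->
  (forall p, f p = \sum_(m < n.+1) k m p + r p) ->
  forall j, (j <= n)%N -> forall v : V,
    (fun s : R => s ^- j * fdiff add j f q (s *: v)) @ (0 : R)^'
      --> (j`!%:R * k j (add q v)).
Proof.
move=> [add0 _ _] _ Hk [rq0 Hr] Hf j jn v.
pose K m := k m (add q v).
pose g (m : 'I_n.+1) (s : R) := K m * ((-1) ^+ j * Sc R j m) * s ^+ (m - j).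
pose E (l : 'I_j.+1) (s : R) :=
  s ^- j * ((-1) ^+ j * (-1) ^+ l * 'C(j, l)%:R) * r (add q (l%:R *: (s *: v))).
have Eq : forall s : R, s != 0 -> s ^- j * fdiff add j f q (s *: v) =
   \sum_(m < n.+1) g m s + \sum_(l < j.+1) E l s.
  move=> s s0; rewrite /fdiff.
  under eq_bigr => l _ do rewrite Hf mulrDr.
  rewrite big_split /= mulrDr mulrDr; congr (_ + _); last first.
    rewrite !mulr_sumr; apply: eq_bigr => l _; rewrite /E; ring.
  under eq_bigr => l _ do rewrite mulr_sumr.
  rewrite exchange_big /= mulr_sumr mulr_sumr; apply: eq_bigr => m _.
  have Hm : \sum_(l < j.+1) (-1) ^+ l * 'C(j, l)%:R * k m (add q (l%:R *: (s *: v)))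
      = K m * s ^+ m * Sc R j m.
    rewrite /Sc mulr_sumr; apply: eq_bigr => l _.
    have mn : (m <= n)%N by rewrite -ltnS.
    rewrite scalerA (homog_scale (Hk m mn)) exprMn /K; ring.
  have sj : s ^- j * s ^+ j = 1 by rewrite mulVf // expf_neq0.
  rewrite Hm /g; case: (ltnP m j) => Hjm.
    by rewrite (proj1 (Sc_val R j)) // !mulr0 !mul0r.
  have -> : s ^+ m = s ^+ (m - j) * s ^+ j by rewrite -exprD subnK.
  transitivity ((s ^- j * s ^+ j) * (K m * ((-1) ^+ j * Sc R j m) * s ^+ (m - j))).
    ring.
  by rewrite sj mul1r.
have Hg : (fun s => \sum_(m < n.+1) g m s) @ (0:R)^' --> j`!%:R * K j.
  have -> : j`!%:R * K j = \sum_(m < n.+1) g m 0.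
    have jn1 : (j < n.+1)%N by rewrite ltnS.
    rewrite (bigD1 (Ordinal jn1)) //= big1 ?addr0.
      rewrite /g /= subnn expr0 mulr1 (proj2 (Sc_val R j)) mulrA -exprD -signr_odd.
      by rewrite oddD addbb expr0 mul1r mulrC.
    move=> m /eqP Hne; rewrite /g; case: (ltnP m j) => Hjm.
      by rewrite (proj1 (Sc_val R j)) // !mulr0 mul0r.
    rewrite expr0n; case: eqP => [H|_]; last by rewrite mulr0.
    exfalso; apply: Hne; apply: val_inj => /=; lia.
  have := (@cvg_big R _ +%R 0 xpredT add_continuous _ (0:R)^' (index_enum (ordinal n.+1)) g (fun m => g m 0)) => H; apply: H.
  move=> m _; rewrite /g; apply: cvgMl_tmp.
  apply/(@continuous_withinNx _ _ (fun x : R => x ^+ (m - j))).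
  exact: exprn_continuous.
have HE : (fun s => \sum_(l < j.+1) E l s) @ (0:R)^' --> (0:R).
  pose rho := fun w : V => r (add q w) / `|w| ^+ n.
  have rho0 : rho 0 = 0 by rewrite /rho add0 rq0 mul0r.
  have Hrho : rho @ (0:V) --> (0:R).
    have H : {for 0, continuous rho} by apply/continuous_withinNx; rewrite rho0.
    by move: H; rewrite /prop_for /continuous_at rho0.
  have rrho : forall w, r (add q w) = `|w| ^+ n * rho w.
    move=> w; have [->|wn0] := eqVneq w 0; first by rewrite rho0 mulr0 add0.
    by rewrite /rho mulrC divfK // expf_neq0 // normr_eq0.
  suff : (fun s => \sum_(l < j.+1) E l s) @ (0:R)^' --> \sum_(l < j.+1) (0:R) by rewrite big1.
  have := (@cvg_big R _ +%R 0 xpredT add_continuous _ (0:R)^' (index_enum (ordinal j.+1)) E (fun _ => 0)) => H; apply: H.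
  move=> l _.
  pose c := (-1) ^+ j * (-1) ^+ l * 'C(j, l)%:R : R.
  pose w := fun s : R => (l%:R * s) *: v.
  have Hw : w @ (0:R) --> (0:V) by exact: lin_cvg.
  have Hrw : (fun s => rho (w s)) @ (0:R) --> (0:R).
    exact: cvg_comp Hw Hrho.
  have Eeq : forall s, E l s = (c * (l%:R * `|v|) ^+ n * rho (w s)) * (`|s| ^+ n * s ^- j).
    move=> s; rewrite /E scalerA rrho -/(w s) /w normrZ normrM normr_nat -/c.
    rewrite !exprMn; ring.
  apply: (@norm_cvg0 _ _ _ ((0:R)^') _). apply: (squeeze_cvgr (f:=fun _ => 0) (h:=fun s => `|c * (l%:R * `|v|) ^+ n| * `|rho (w s)|)).
  - near=> s; rewrite normr_ge0 /= Eeq normrM (normrM _ (rho _)).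
    rewrite ler_piMr ?mulr_ge0 ?normr_ge0 //.
    have s0 : s != 0 by near: s; exact: nbhs_dnbhs_neq.
    have s1 : `|s| < 1 by near: s; exact: (@dnbhs0_lt _ R^o).
    rewrite normrM normfV !normrX normr_id.
    have -> : `|s| ^+ n = `|s| ^+ (n - j) * `|s| ^+ j by rewrite -exprD subnK.
    rewrite mulfK ?expf_neq0 ?normr_eq0 //.
    by rewrite exprn_ile1 ?normr_ge0 // ltW.
  - exact: cvg_cst.
  - rewrite -[X in _ --> X](mulr0 `|c * (l%:R * `|v|) ^+ n|); apply: cvgMl_tmp.
    apply: (proj2 (@norm_cvg0P _ _ _ ((0:R)^') _ _)).
    apply: (@cvg_within_filter _ _ _ (nbhs (0:R)) _ _ (fun y => y != 0)); exact: Hrw.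
have HL : (fun s => \sum_(m < n.+1) g m s + \sum_(l < j.+1) E l s) @ (0:R)^'
    --> j`!%:R * K j.
  by rewrite -[X in _ --> X]addr0; apply: cvgD.
apply: (cvg_trans _ HL); apply: near_eq_cvg; near=> s.
rewrite Eq //; near: s; exact: nbhs_dnbhs_neq.
Unshelve. all: by end_near.
Qed.
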